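(* Let $k$ be a complete non-trivially valued non-Archimedean field and $\Gamma\le\mathrm{PGL}(2,k)$ a finitely generated subgroup that is not strongly irreducible. Then one of the following holds: (1) $\Gamma$ has potential good reduction; (2) $\Gamma$ is conjugate in $\mathrm{PGL}(2,k)$ to a subgroup of the affine group $\{z\mapsto az+b:\ a\in k^\times,\ b\in k\}$; (3) $\Gamma$ is conjugate in $\mathrm{PGL}(2,k)$ to a subgroup of $\{z\mapsto\lambda z^{\pm1}:\ \lambda\in k^\times\}$.
   Context: $\Gamma$ is strongly irreducible if it has no finite orbit in $\mathbb{P}^1(k)$. $\Gamma$ has potential good reduction if there is a finite extension $K/k$ and $h\in\mathrm{PGL}(2,K)$ such that $h\Gamma h^{-1}$ is contained in $\mathrm{PGL}(2,K^\circ)$, the stabilizer of the Gauss point $\sum a_iZ^i\mapsto\max|a_i|$ of the Berkovich line over $K$ ($K^\circ$ the valuation ring). *)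

(* Defs.v *)
From HB Require Import structures.
From mathcomp Require Import all_boot all_order all_algebra all_field.
From mathcomp Require Import reals.
Set Implicit Arguments. Unset Strict Implicit. Unset Printing Implicit Defensive.
Import Order.TTheory GRing.Theory Num.Theory.
Local Open Scope ring_scope.

Definition nonarch_abs (R : realType) (F : fieldType) (v : F -> R) : Prop :=
  [/\ forall x, 0 <= v x,
      forall x, v x = 0 -> x = 0,
      v 0 = 0,
      forall x y, v (x * y) = v x * v y
    & forall x y, v (x + y) <= Num.max (v x) (v y)].

Definition nontrivial_abs (R : realType) (F : fieldType) (v : F -> R) : Prop :=
  exists x : F, v x != 0 /\ v x != 1.

Definition complete_abs (R : realType) (F : fieldType) (v : F -> R) : Prop :=
  forall u : nat -> F,
    (forall e : R, 0 < e -> exists N : nat, forall m n : nat,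
        (N <= m)%N -> (N <= n)%N -> v (u m - u n) < e) ->
    exists l : F, forall e : R, 0 < e -> exists N : nat, forall n : nat,
        (N <= n)%N -> v (u n - l) < e.

(* ---------- Subgroups of PGL(2,k) ----------
   A subgroup Gamma <= PGL(2,k) is represented by its full preimage in
   GL(2,k), a predicate on 2x2 matrices.  The subgroup generated by the
   classes of finitely many invertible matrices s has as preimage the
   subgroup of GL(2,k) generated by s and the nonzero scalar matrices. *)
Inductive gen_pgl (k : fieldType) (s : seq 'M[k]_2) : 'M[k]_2 -> Prop :=
| gen_pgl_scalar (c : k) : c != 0 -> gen_pgl s c%:M
| gen_pgl_elt (g : 'M[k]_2) : g \in s -> gen_pgl s g
| gen_pgl_inv (g : 'M[k]_2) : g \in s -> gen_pgl s (invmx g)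
| gen_pgl_mul (a b : 'M[k]_2) : gen_pgl s a -> gen_pgl s b -> gen_pgl s (a *m b).

(* Points of P^1(k) are lines spanned by nonzero column vectors (z,1)^T etc.;
   a matrix g acts by v |-> g v (Moebius action z |-> (az+b)/(cz+d)). *)
Definition has_finite_orbit (k : fieldType) (G : 'M[k]_2 -> Prop) : Prop :=
  exists v : 'cV[k]_2, v != 0 /\
    exists ws : seq 'cV[k]_2,
      forall g, G g -> exists2 w, w \in ws & exists c : k, c != 0 /\ g *m v = c *: w.

Definition strongly_irreducible (k : fieldType) (G : 'M[k]_2 -> Prop) : Prop :=
  ~ has_finite_orbit G.

(* PGL(2,K°) inside PGL(2,K): classes represented by a matrix in GL(2,K°),
   i.e. all entries of absolute value <= 1 and determinant a unit of K°. *)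
Definition in_GL2_integral (R : realType) (K : fieldType) (w : K -> R)
    (M : 'M[K]_2) : Prop :=
  (forall i j, w (M i j) <= 1) /\ w (\det M) = 1.

Definition in_PGL2_integral (R : realType) (K : fieldType) (w : K -> R)
    (M : 'M[K]_2) : Prop :=
  exists c : K, c != 0 /\ in_GL2_integral w (c *: M).

(* Potential good reduction: there are a finite extension K/k, the (unique,
   k being complete) extension w of the absolute value to K, and
   h in PGL(2,K) with h Gamma h^-1 <= PGL(2,K°). *)
Definition potential_good_reduction (R : realType) (k : fieldType) (v : k -> R)
    (G : 'M[k]_2 -> Prop) : Prop :=
  exists (K : fieldExtType k) (w : K -> R),
    [/\ nonarch_abs w,
        (forall a : k, w (a%:A) = v a)
      & exists h : 'M[K]_2, h \in unitmx /\
          forall g, G g ->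
            in_PGL2_integral w (h *m map_mx (fun a : k => a%:A) g *m invmx h)].

(* Affine group {z |-> a z + b}: classes of invertible upper triangular matrices. *)
Definition affine_mx (k : fieldType) (M : 'M[k]_2) : Prop := M 1 0 = 0.

(* {z |-> lambda z^{+-1}}: classes of invertible diagonal or antidiagonal matrices. *)
Definition monomial_mx (k : fieldType) (M : 'M[k]_2) : Prop :=
  (M 0 1 = 0 /\ M 1 0 = 0) \/ (M 0 0 = 0 /\ M 1 1 = 0).

Definition conj_into (k : fieldType) (P : 'M[k]_2 -> Prop) (G : 'M[k]_2 -> Prop) : Prop :=
  exists h : 'M[k]_2, h \in unitmx /\ forall g, G g -> P (h *m g *m invmx h).

(* Main.v *)
Require Import Defs.
From HB Require Import structures.
From mathcomp Require Import all_boot all_order all_algebra all_field.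
From mathcomp Require Import reals ring lra.
From Stdlib Require Import Classical.
Set Implicit Arguments. Unset Strict Implicit. Unset Printing Implicit Defensive.
Import Order.TTheory GRing.Theory Num.Theory.
Local Open Scope ring_scope.

Section Abs.
Variables (R : realType) (F : fieldType) (w : F -> R).
Hypothesis Hw : nonarch_abs w.

Lemma w_ge0 x : 0 <= w x. Proof. by case: Hw. Qed.
Lemma w0 : w 0 = 0. Proof. by case: Hw. Qed.
Lemma wM x y : w (x * y) = w x * w y. Proof. by case: Hw. Qed.
Lemma w_ultra x y : w (x + y) <= Num.max (w x) (w y). Proof. by case: Hw. Qed.
Lemma w_eq0 x : (w x = 0) <-> (x = 0).
Proof. split; first by case: Hw => _ H _ _ _; apply: H. by move->; apply: w0. Qed.
Lemma w_neq0 x : x != 0 -> w x != 0.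
Proof. by move=> /eqP H; apply/eqP => /w_eq0. Qed.
Lemma w_gt0 x : x != 0 -> 0 < w x.
Proof. by move=> /w_neq0 H; rewrite lt_def H w_ge0. Qed.
Lemma w1 : w 1 = 1.
Proof.
have H1 : w 1 != 0 by apply: w_neq0; exact: oner_neq0.
have := wM 1 1; rewrite mulr1 => /eqP; rewrite -subr_eq0 -{1}(mulr1 (w 1)) -mulrBr mulf_eq0.
by rewrite (negbTE H1) /= subr_eq0 => /eqP.
Qed.
Lemma wN1 : w (-1) = 1.
Proof.
have := wM (-1) (-1); rewrite mulrNN mulr1 w1 => H.
have := w_ge0 (-1); nra.
Qed.
Lemma wN x : w (- x) = w x.
Proof. by rewrite -mulN1r wM wN1 mul1r. Qed.
Lemma wV x : w (x^-1) = (w x)^-1.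
Proof.
have [->|nz] := eqVneq x 0; first by rewrite invr0 w0 invr0.
apply: (mulfI (w_neq0 nz)); by rewrite -wM !mulfV ?w_neq0 // w1.
Qed.
Lemma wD_le x y m : w x <= m -> w y <= m -> w (x + y) <= m.
Proof. move=> hx hy; apply: le_trans (w_ultra x y) _; by rewrite ge_max hx hy. Qed.
Lemma wB_le x y m : w x <= m -> w y <= m -> w (x - y) <= m.
Proof. by move=> hx hy; apply: wD_le; rewrite ?wN. Qed.
Lemma w_strict x y : w x < w y -> w (x + y) = w y.
Proof.
move=> lt; apply/eqP; rewrite eq_le; apply/andP; split.
  by apply: wD_le => //; apply: ltW.
have : w y <= Num.max (w (x + y)) (w (- x)).
  by have := w_ultra (x + y) (- x); rewrite addrC addKr.
rewrite wN le_max => /orP[] // H; move: (lt_le_trans lt H); by rewrite ltxx.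
Qed.
Lemma w_max_neq x y : w x != w y -> w (x + y) = Num.max (w x) (w y).
Proof.
rewrite neq_lt => /orP[] H.
  by rewrite w_strict // max_r // ltW.
by rewrite addrC w_strict // max_l // ltW.
Qed.
End Abs.

Section Real.
Variable R : realType.
Lemma maxmul (A1 B1 A2 B2 X Y : R) :
  0 <= A1 -> 0 <= B1 -> 0 <= A2 -> 0 <= B2 ->
  A1 != B1 -> A2 != B2 ->
  X <= Num.max (A1*A2) (B1*B2) -> (A1*A2 != B1*B2 -> X = Num.max (A1*A2) (B1*B2)) ->
  Y <= Num.max (A1*B2) (A2*B1) -> (A1*B2 != A2*B1 -> Y = Num.max (A1*B2) (A2*B1)) ->
  Num.max X Y = Num.max A1 B1 * Num.max A2 B2.
Proof.
move=> a1 b1 a2 b2 n1 n2 hX eX hY eY.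
move: n1 n2; rewrite !neq_lt => /orP[] l1 /orP[] l2.
- have P : A1 * A2 < B1 * B2 by nra.
  have HX : X = B1 * B2 by rewrite eX ?(lt_eqF P) // max_r // ltW.
  rewrite HX max_l; last by apply: le_trans hY _; rewrite ge_max; apply/andP; split; nra.
  by rewrite max_r ?ltW // max_r ?ltW.
- have P : A1 * B2 < A2 * B1 by nra.
  have HY : Y = A2 * B1 by rewrite eY ?(lt_eqF P) // max_r // ltW.
  rewrite HY max_r; last by apply: le_trans hX _; rewrite ge_max; apply/andP; split; nra.
  by rewrite max_r ?ltW // max_l ?ltW // mulrC.
- have P : A2 * B1 < A1 * B2 by nra.
  have HY : Y = A1 * B2 by rewrite eY ?(gt_eqF P) // max_l // ltW.
  rewrite HY max_r; last by apply: le_trans hX _; rewrite ge_max; apply/andP; split; nra.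
  by rewrite max_l ?ltW // max_r ?ltW.
- have P : B1 * B2 < A1 * A2 by nra.
  have HX : X = A1 * A2 by rewrite eX ?(gt_eqF P) // max_l // ltW.
  rewrite HX max_l; last by apply: le_trans hY _; rewrite ge_max; apply/andP; split; nra.
  by rewrite max_l ?ltW // max_l ?ltW.
Qed.
End Real.

Lemma prodE2 (F : fieldType) (L : fieldExtType F) (z : L) (t a1 b1 a2 b2 : F) :
  z ^+ 2 = t%:A ->
  (a1 *: 1 + b1 *: z) * (a2 *: 1 + b2 *: z) = (a1 * a2 + t * (b1 * b2)) *: 1 + (a1 * b2 + a2 * b1) *: z.
Proof.
move=> z2.
rewrite -!(mulr_algl _ z) -!in_algE !rmorphD !rmorphM /= -z2.
set A1 := a1%:A. set A2 := a2%:A. set B1 := b1%:A. set B2 := b2%:A.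
ring.
Qed.

Section Step.
Variables (R : realType) (F : fieldType) (w : F -> R).
Hypothesis Hw : nonarch_abs w.

Lemma adjoin_sqrt (t : F) (Ht : forall y : F, w y ^+ 2 != w t) :
  exists (L : fieldExtType F) (w' : L -> R),
    [/\ nonarch_abs w', (forall a, w' a%:A = w a) & exists z : L, w' z ^+ 2 = w t].
Proof.
have t0 : t != 0.
  apply/eqP=> t0; move: (Ht 0); by rewrite t0 (w0 Hw) expr0n /= eqxx.
have wsq y : w (y ^+ 2) = w y ^+ 2 by rewrite !expr2 (wM Hw).
pose p : {poly F} := 'X^2 - t%:P.
have sp : size p = 3%N by rewrite size_XnsubC.
have irr : irreducible_poly p.
  apply: cubic_irreducible => [|x]; first by rewrite sp.
  rewrite /root /p !hornerE subr_eq0; apply/negP => /eqP H.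
  by move: (Ht x); rewrite -wsq H eqxx.
have [L dimL [z rootz _]] := irredp_FAdjoin irr.
have z2 : z ^+ 2 = t%:A.
  move: rootz; rewrite /root rmorphB /= map_polyXn map_polyC /= !hornerE subr_eq0.
  by move/eqP.
have zn c : z != c%:A.
  apply/eqP => zc; move: z2; rewrite zc -!in_algE -rmorphXn /= => /(fmorph_inj (in_alg L)) H.
  by move: (Ht c); rewrite -wsq H eqxx.
pose X : 2.-tuple L := [tuple 1; z].
have freeX : free X.
  rewrite /= free_cons seq1_free span_seq1; apply/andP; split; last first.
    by move: (zn 0); rewrite scale0r.
  apply/negP => /vlineP [c Hc].
  have c0 : c != 0 by apply/eqP=> c0; move: Hc; rewrite c0 scale0r; apply/eqP; exact: oner_neq0.
  move: (zn c^-1); rewrite Hc scalerA mulVf // scale1r => /eqP; apply.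
  done.
have basX : basis_of fullv X.
  by rewrite basisEfree freeX subvf /= dimL sp leqnn.
have spanX : span X = fullv by apply: span_basis.
pose i0 : 'I_2 := ord0. pose i1 : 'I_2 := lift ord0 ord0.
pose ca y := coord X i0 y.
pose cb y := coord X i1 y.
have yE y : y = ca y *: 1 + cb y *: z.
  have H := coord_span (X := X) (v := y); rewrite spanX memvf in H.
  rewrite {1}(H isT) !big_ord_recl big_ord0 addr0; reflexivity.
have cE a b : ca (a *: 1 + b *: z) = a /\ cb (a *: 1 + b *: z) = b.
  have c00 := coord_free i0 i0 freeX; have c01 := coord_free i0 i1 freeX.
  have c10 := coord_free i1 i0 freeX; have c11 := coord_free i1 i1 freeX.
  rewrite /= in c00 c01 c10 c11.
  by rewrite /ca /cb !linearD !linearZ /= c00 c01 c10 c11 /= !mulr1 !mulr0 addr0 add0r.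
have wt0 : 0 < w t by apply: w_gt0.
pose s := Num.sqrt (w t).
have s0 : 0 < s by rewrite sqrtr_gt0.
have s2 : s ^+ 2 = w t by rewrite sqr_sqrtr // ltW.
have ca0 : ca 0 = 0 by rewrite /ca linear0.
have cb0 : cb 0 = 0 by rewrite /cb linear0.
have caD y1 y2 : ca (y1 + y2) = ca y1 + ca y2 by rewrite /ca linearD.
have cbD y1 y2 : cb (y1 + y2) = cb y1 + cb y2 by rewrite /cb linearD.
have wg := w_ge0 Hw.
have key y : y != 0 -> w (ca y) != s * w (cb y).
  move=> yn; apply/eqP => E.
  have [b0|bn] := eqVneq (cb y) 0.
    move: E; rewrite b0 (w0 Hw) mulr0 => /(w_eq0 Hw) a0.
    by move: yn; rewrite (yE y) a0 b0 !scale0r addr0 eqxx.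
  move: (Ht (ca y / cb y)); rewrite (wM Hw) (wV Hw) E mulrK ?unitfE ?(w_neq0 Hw) //.
  by rewrite s2 eqxx.
pose w' y := Num.max (w (ca y)) (s * w (cb y)).
have w'0 : w' 0 = 0 by rewrite /w' ca0 cb0 (w0 Hw) mulr0 maxxx.
have w'ge y : 0 <= w' y by rewrite /w' le_max wg.
have w'eq0 y : w' y = 0 -> y = 0.
  move=> E; have : w (ca y) <= 0 by rewrite -E /w' le_max lexx.
  have : s * w (cb y) <= 0 by rewrite -E /w' le_max lexx orbT.
  move=> h2 h1.
  have a0 : ca y = 0 by apply/(w_eq0 Hw)/eqP; rewrite eq_le h1 wg.
  have b0 : cb y = 0.
    apply/(w_eq0 Hw)/eqP; rewrite eq_le wg andbT.
    by rewrite -(pmulr_rle0 _ s0).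
  by rewrite (yE y) a0 b0 !scale0r addr0.
have prodE y1 y2 : y1 * y2 = (ca y1 * ca y2 + t * (cb y1 * cb y2)) *: 1
                         + (ca y1 * cb y2 + ca y2 * cb y1) *: z.
  by rewrite {1}(yE y1) {1}(yE y2) (@prodE2 _ _ z t _ _ _ _ z2).
exists L, w'; split.
- split => //.
  + move=> y1 y2.
    have [->|n1] := eqVneq y1 0; first by rewrite mul0r w'0 mul0r.
    have [->|n2] := eqVneq y2 0; first by rewrite mulr0 w'0 mulr0.
    rewrite /w' prodE; case: (cE (ca y1 * ca y2 + t * (cb y1 * cb y2)) (ca y1 * cb y2 + ca y2 * cb y1)) => -> ->.
    have m1 : w (ca y1 * ca y2) = w (ca y1) * w (ca y2) by rewrite (wM Hw).
    have m2 : w (t * (cb y1 * cb y2)) = (s * w (cb y1)) * (s * w (cb y2)).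
      by rewrite !(wM Hw) -s2; ring.
    have m3 : s * w (ca y1 * cb y2) = w (ca y1) * (s * w (cb y2)).
      by rewrite !(wM Hw); ring.
    have m4 : s * w (ca y2 * cb y1) = w (ca y2) * (s * w (cb y1)).
      by rewrite !(wM Hw); ring.
    apply: maxmul; rewrite ?wg ?mulr_ge0 ?(ltW s0) ?key //.
    * by rewrite -m1 -m2; apply: w_ultra.
    * by rewrite -m1 -m2; apply: w_max_neq.
    * by rewrite -m3 -m4 -maxr_pMr ?(ltW s0) // ler_wpM2l ?(ltW s0) // w_ultra.
    * rewrite -m3 -m4 -maxr_pMr ?(ltW s0) // => ne; rewrite w_max_neq //.
      by apply: contra ne => /eqP ->.
  + move=> y1 y2; rewrite /w' caD cbD ge_max; apply/andP; split.
      apply: le_trans (w_ultra Hw _ _) _.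
      by rewrite ge_max !le_max !lexx ?orbT.
    have h := w_ultra Hw (cb y1) (cb y2).
    apply: le_trans (ler_wpM2l (ltW s0) h) _.
    by rewrite maxr_pMr ?(ltW s0) // ge_max !le_max !lexx ?orbT.
- move=> a; rewrite /w'.
  have := cE a 0; rewrite scale0r addr0 => -[-> ->].
  by rewrite (w0 Hw) mulr0 max_l.
- exists z; rewrite /w'.
  have := cE 0 1; rewrite scale0r add0r scale1r => -[-> ->].
  by rewrite (w0 Hw) w1 // mulr1 max_r ?(ltW s0).
Qed.
End Step.

Lemma tower (R : realType) (k : fieldType) (v : k -> R) (Hv : nonarch_abs v) (ds : seq k) :
  exists (K : fieldExtType k) (w : K -> R),
    [/\ nonarch_abs w, (forall a, w a%:A = v a)
      & forall d, d \in ds -> exists y : K, w (d%:A) = w y ^+ 2].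
Proof.
elim: ds => [|d ds [K [w [Hw Hext Hsq]]]].
  exists k^o, v; split => //.
  move=> a; rewrite -[a%:A]/(a * 1 : k); by rewrite mulr1.
have [[y0 Hy0]|Hn] := classic (exists y : K, w (d%:A) = w y ^+ 2).
  exists K, w; split => // d'; rewrite inE => /orP[/eqP ->|/Hsq //].
  by exists y0.
have Ht : forall y : K, w y ^+ 2 != w d%:A.
  by move=> y; apply/eqP => E; apply: Hn; exists y.
have [L [w' [Hw' Hext' [z Hz]]]] := adjoin_sqrt Hw Ht.
exists (baseFieldType L), w'; split => //.
- by move=> a; rewrite -Hext; apply: Hext'.
- move=> d'; rewrite inE => /orP[/eqP ->|/Hsq [y Hy]].
    exists z; rewrite Hz.
    change (w' ((d%:A : K)%:A : L) = w d%:A); by rewrite Hext'.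
  exists (y%:A : L).
  change (w' ((d'%:A : K)%:A : L) = w' (y%:A : L) ^+ 2).
  by rewrite !Hext' Hy.
Qed.

Section M2.
Variable F : comNzRingType.
Lemma ord2P (i : 'I_2) : i = 0 \/ i = 1.
Proof. case: i => [[|[|//]]] Hi; [left|right]; exact: val_inj. Qed.

Definition mx2 (a b c d : F) : 'M[F]_2 :=
  \matrix_(i < 2, j < 2) if i == 0 then (if j == 0 then a else b) else (if j == 0 then c else d).
Definition vc2 (a b : F) : 'cV[F]_2 := \col_(i < 2) if i == 0 then a else b.

Lemma mx2E a b c d : [/\ mx2 a b c d 0 0 = a, mx2 a b c d 0 1 = b, mx2 a b c d 1 0 = c & mx2 a b c d 1 1 = d].
Proof. by rewrite !mxE. Qed.
Lemma vc2E a b : vc2 a b 0 0 = a /\ vc2 a b 1 0 = b.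
Proof. by rewrite !mxE. Qed.

Lemma mx2_eta (M : 'M[F]_2) : M = mx2 (M 0 0) (M 0 1) (M 1 0) (M 1 1).
Proof. apply/matrixP=> i j; rewrite !mxE; by case: (ord2P i)=> ->; case: (ord2P j) => ->. Qed.
Lemma vc2_eta (v : 'cV[F]_2) : v = vc2 (v 0 0) (v 1 0).
Proof. apply/matrixP=> i j; rewrite !mxE (ord1 j); by case: (ord2P i)=> ->. Qed.

Lemma mx2_1 : 1%:M = mx2 1 0 0 1 :> 'M[F]_2.
Proof. apply/matrixP=> i j; rewrite !mxE; by case: (ord2P i)=> ->; case: (ord2P j) => ->. Qed.

Lemma mulmx2 a b c d a' b' c' d' :
  mx2 a b c d *m mx2 a' b' c' d' = mx2 (a*a'+b*c') (a*b'+b*d') (c*a'+d*c') (c*b'+d*d').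
Proof.
apply/matrixP=> i j; rewrite !mxE !big_ord_recl big_ord0 !mxE addr0 /=.
by case: (ord2P i)=> ->; case: (ord2P j) => ->.
Qed.
Lemma mulmxv2 a b c d x y :
  mx2 a b c d *m vc2 x y = vc2 (a*x+b*y) (c*x+d*y).
Proof.
apply/matrixP=> i j; rewrite !mxE !big_ord_recl big_ord0 !mxE addr0 /=.
by case: (ord2P i)=> ->.
Qed.
Lemma det2 a b c d : \det (mx2 a b c d) = a * d - b * c.
Proof.
rewrite (expand_det_row _ 0) !big_ord_recl big_ord0 addr0 /cofactor !det_mx11 !mxE /=.
rewrite !expr0 !expr1 /=. ring.
Qed.
End M2.

Section Lat.
Variables (R : realType) (F : fieldType) (w : F -> R).
Hypothesis Hw : nonarch_abs w.

Definition intv (x : 'cV[F]_2) := forall i, w (x i 0) <= 1.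
Definition intm (M : 'M[F]_2) := forall i j, w (M i j) <= 1.
Definition GLO (U : 'M[F]_2) := exists U', [/\ intm U, intm U', U *m U' = 1%:M & U' *m U = 1%:M].

Lemma intvE a b : intv (vc2 a b) <-> w a <= 1 /\ w b <= 1.
Proof.
split; first by move=> H; have := H 0; have := H 1; rewrite !mxE.
by case=> ha hb i; rewrite !mxE; case: (ord2P i) => ->.
Qed.
Lemma intv_eta x : intv x <-> w (x 0 0) <= 1 /\ w (x 1 0) <= 1.
Proof. by rewrite {1}[x]vc2_eta intvE. Qed.

Lemma intmE a b c d : intm (mx2 a b c d) <-> [/\ w a <= 1, w b <= 1, w c <= 1 & w d <= 1].
Proof.
split; first by move=> H; have := H 0 0; have := H 0 1; have := H 1 0; have := H 1 1; rewrite !mxE.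
by case=> ha hb hc hd i j; rewrite !mxE; case: (ord2P i) => ->; case: (ord2P j) => ->.
Qed.

Lemma w_sum2 a b c d : w a <= 1 -> w b <= 1 -> w c <= 1 -> w d <= 1 -> w (a * b + c * d) <= 1.
Proof.
move=> ha hb hc hd; apply: (wD_le Hw); rewrite (wM Hw).
  by rewrite -(mulr1 1); apply: ler_pM => //; apply: w_ge0.
by rewrite -(mulr1 1); apply: ler_pM => //; apply: w_ge0.
Qed.

Lemma intm_intv M x : intm M -> intv x -> intv (M *m x).
Proof.
rewrite [M]mx2_eta [x]vc2_eta mulmxv2 intmE !intvE => -[h1 h2 h3 h4] [h5 h6].
by split; apply: w_sum2.
Qed.

Lemma GLO_intv U x : GLO U -> (intv (U *m x) <-> intv x).
Proof.
case=> U' [hU hU' e1 e2]; split; last exact: intm_intv.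
by move=> H; rewrite -[x]mul1mx -e2 -mulmxA; apply: intm_intv.
Qed.

Lemma intm_mul A B : intm A -> intm B -> intm (A *m B).
Proof.
rewrite [A]mx2_eta [B]mx2_eta mulmx2 !intmE => -[h1 h2 h3 h4] [h5 h6 h7 h8].
by split; apply: w_sum2.
Qed.

Lemma GLO_mul U V : GLO U -> GLO V -> GLO (U *m V).
Proof.
case=> U' [hU hU' e1 e2] [V' [hV hV' e3 e4]]; exists (V' *m U'); split.
- exact: intm_mul.
- exact: intm_mul.
- by rewrite -mulmxA (mulmxA V) e3 mul1mx.
- by rewrite -mulmxA (mulmxA U') e2 mul1mx.
Qed.

Lemma GLO_unit U : GLO U -> U \in unitmx.
Proof.
case=> U' [_ _ e1 _]; rewrite unitmxE unitfE.
apply/eqP => d0; have := congr1 determinant e1.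
by rewrite det_mulmx d0 mul0r det1 => /eqP; rewrite eq_sym oner_eq0.
Qed.

Lemma w1' : w 1 <= 1. Proof. by rewrite (w1 Hw). Qed.
Lemma w0' : w 0 <= 1. Proof. by rewrite (w0 Hw) ler01. Qed.
Lemma wN' x : w x <= 1 -> w (- x) <= 1. Proof. by rewrite (wN Hw). Qed.

Definition swap2 : 'M[F]_2 := mx2 0 1 1 0.
Lemma GLO_swap : GLO swap2.
Proof.
exists swap2; rewrite /swap2 mulmx2 mx2_1 !(mul0r, mul1r, mulr0, mulr1, addr0, add0r).
by split => //; apply/intmE; split; rewrite ?w1' ?w0'.
Qed.

Lemma GLO_L c : w c <= 1 -> GLO (mx2 1 0 c 1).
Proof.
move=> hc; exists (mx2 1 0 (-c) 1); rewrite !mulmx2 mx2_1 !(mul0r, mul1r, mulr0, mulr1, addr0, add0r) addrN addNr.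
by split => //; apply/intmE; split; rewrite ?w1' ?w0' ?wN'.
Qed.

Lemma GLO_R c : w c <= 1 -> GLO (mx2 1 c 0 1).
Proof.
move=> hc; exists (mx2 1 (-c) 0 1); rewrite !mulmx2 mx2_1 !(mul0r, mul1r, mulr0, mulr1, addr0, add0r) addrN addNr.
by split => //; apply/intmE; split; rewrite ?w1' ?w0' ?wN'.
Qed.

Lemma GLO_1 : GLO 1%:M.
Proof.
have h : intm 1%:M by rewrite mx2_1; apply/intmE; split; rewrite ?w1' ?w0'.
by exists 1%:M; rewrite mul1mx.
Qed.

Lemma unit_mx2 (a b c d : F) : (mx2 a b c d \in unitmx) = (a * d - b * c != 0).
Proof. by rewrite unitmxE det2 unitfE. Qed.

Lemma wdiv_le x y : w x <= w y -> w (x / y) <= 1.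
Proof.
move=> h; have [->|yn] := eqVneq y 0; first by rewrite invr0 mulr0 w0'.
by rewrite (wM Hw) (wV Hw) ler_pdivrMr ?mul1r // w_gt0.
Qed.

Lemma snf_core (a b c d : F) : w b <= w a -> w c <= w a -> a * d - b * c != 0 ->
  exists U V d1 d2, [/\ GLO U, GLO V, d1 != 0, d2 != 0 & mx2 a b c d = U *m mx2 d1 0 0 d2 *m V].
Proof.
move=> hb hc det0.
have a0 : a != 0.
  apply: contra det0 => /eqP a0; move: hb; rewrite a0 (w0 Hw) => hb.
  have -> : b = 0 by apply/(w_eq0 Hw)/eqP; rewrite eq_le hb w_ge0.
  by rewrite !mul0r subrr.
exists (mx2 1 0 (c / a) 1), (mx2 1 (b / a) 0 1), a, (d - c * b / a); split => //.
- by apply: GLO_L; apply: wdiv_le.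
- by apply: GLO_R; apply: wdiv_le.
- apply: contra det0 => /eqP e.
  have -> : a * d - b * c = a * (d - c * b / a) by field.
  by rewrite e mulr0.
- by rewrite !mulmx2; congr mx2; field.
Qed.

Lemma max4 (x0 x1 x2 x3 : R) :
  [\/ [/\ x1 <= x0, x2 <= x0 & x3 <= x0], [/\ x0 <= x1, x2 <= x1 & x3 <= x1],
       [/\ x0 <= x2, x1 <= x2 & x3 <= x2] | [/\ x0 <= x3, x1 <= x3 & x2 <= x3]].
Proof.
case: (leP x1 x0) => h01; case: (leP x3 x2) => h23.
- case: (leP x2 x0) => h; [apply: Or41|apply: Or43]; split; lra.
- case: (leP x3 x0) => h; [apply: Or41|apply: Or44]; split; lra.
- case: (leP x2 x1) => h; [apply: Or42|apply: Or43]; split; lra.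
- case: (leP x3 x1) => h; [apply: Or42|apply: Or44]; split; lra.
Qed.

Lemma swapl (a b c d : F) : swap2 *m mx2 a b c d = mx2 c d a b.
Proof. by rewrite /swap2 mulmx2; congr mx2; ring. Qed.
Lemma swapr (a b c d : F) : mx2 a b c d *m swap2 = mx2 b a d c.
Proof. by rewrite /swap2 mulmx2; congr mx2; ring. Qed.

Lemma snf T : T \in unitmx -> exists U V d1 d2,
  [/\ GLO U, GLO V, d1 != 0, d2 != 0 & T = U *m mx2 d1 0 0 d2 *m V].
Proof.
rewrite [T]mx2_eta unit_mx2.
move: (T 0 0) (T 0 1) (T 1 0) (T 1 1) => a b c d det0.
case: (max4 (w a) (w b) (w c) (w d)) => -[h1 h2 h3].
- exact: snf_core.
- have [U [V [d1 [d2 [hU hV n1 n2 e]]]]] : exists U V d1 d2,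
    [/\ GLO U, GLO V, d1 != 0, d2 != 0 & mx2 b a d c = U *m mx2 d1 0 0 d2 *m V].
    apply: snf_core => //; have -> : b * c - a * d = -(a * d - b * c) by ring.
    by rewrite oppr_eq0.
  exists U, (V *m swap2), d1, d2; split => //; first exact: GLO_mul GLO_swap.
  by rewrite mulmxA -e swapr.
- have [U [V [d1 [d2 [hU hV n1 n2 e]]]]] : exists U V d1 d2,
    [/\ GLO U, GLO V, d1 != 0, d2 != 0 & mx2 c d a b = U *m mx2 d1 0 0 d2 *m V].
    apply: snf_core => //; have -> : c * b - d * a = -(a * d - b * c) by ring.
    by rewrite oppr_eq0.
  exists (swap2 *m U), V, d1, d2; split => //; first exact: GLO_mul GLO_swap hU.
  by rewrite -!mulmxA (mulmxA U) -e swapl.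
- have [U [V [d1 [d2 [hU hV n1 n2 e]]]]] : exists U V d1 d2,
    [/\ GLO U, GLO V, d1 != 0, d2 != 0 & mx2 d c b a = U *m mx2 d1 0 0 d2 *m V].
    apply: snf_core => //; have -> : d * a - c * b = (a * d - b * c) by ring.
    by [].
  exists (swap2 *m U), (V *m swap2), d1, d2; split => //.
  + exact: GLO_mul GLO_swap hU.
  + exact: GLO_mul hV GLO_swap.
  by rewrite !mulmxA -(mulmxA swap2) -(mulmxA _ _ V) -e swapl swapr.
Qed.
End Lat.

Section Meet.
Variables (R : realType) (F : fieldType) (w : F -> R).
Hypothesis Hw : nonarch_abs w.
Local Notation intv := (intv w).

Lemma comp_meet (d y : F) :
  (w y <= 1 /\ w (d * y) <= 1) <-> w ((if 1 <= w d then d else 1) * y) <= 1.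
Proof.
have gy := w_ge0 Hw y; have gd := w_ge0 Hw d.
rewrite !(wM Hw); case: ifP => h; rewrite ?(w1 Hw) ?mul1r; split.
- by case.
- by move=> H; split => //; nra.
- by case.
- by move=> H; split => //; move/negbT: h; rewrite -ltNge => h; nra.
Qed.

Lemma meet2 Q1 Q2 : Q1 \in unitmx -> Q2 \in unitmx ->
  exists Q3, Q3 \in unitmx /\ forall x, intv (Q3 *m x) <-> intv (Q1 *m x) /\ intv (Q2 *m x).
Proof.
move=> u1 u2.
have uT : Q2 *m invmx Q1 \in unitmx by rewrite unitmx_mul u2 unitmx_inv u1.
have [U [V [d1 [d2 [hU hV n1 n2 e]]]]] := snf Hw uT.
pose e1 := if 1 <= w d1 then d1 else 1.
pose e2 := if 1 <= w d2 then d2 else 1.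
have ne1 : e1 != 0 by rewrite /e1; case: ifP => //; rewrite oner_eq0.
have ne2 : e2 != 0 by rewrite /e2; case: ifP => //; rewrite oner_eq0.
exists (mx2 e1 0 0 e2 *m V *m Q1); split.
  rewrite !unitmx_mul u1 (GLO_unit hV) unit_mx2 andbT andbT mulr0 subr0.
  by rewrite mulf_neq0.
move=> x.
have eQ2 : Q2 *m x = U *m (mx2 d1 0 0 d2 *m (V *m (Q1 *m x))).
  by rewrite !mulmxA -e mulmxKV.
rewrite eQ2 (GLO_intv Hw _ hU) -(GLO_intv Hw (Q1 *m x) hV) -!mulmxA.
move: (V *m (Q1 *m x)) => y.
rewrite [y]vc2_eta !mulmxv2 !intvE !mul0r !addr0 !add0r -!comp_meet.
by split; [case=> -[? ?] [? ?]|case=> -[? ?] [? ?]].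
Qed.

Lemma meet_list (A0 : 'M[F]_2) (s : seq 'M[F]_2) : A0 \in unitmx ->
  all (fun A => A \in unitmx) s ->
  exists Q, Q \in unitmx /\ forall x, intv (Q *m x) <-> (intv (A0 *m x) /\ forall A, A \in s -> intv (A *m x)).
Proof.
move=> u0; elim: s => [|A s IH] /=.
  by move=> _; exists A0; split => // x; split; [move=> h; split|case].
case/andP => uA /IH [Q [uQ HQ]].
have [Q3 [u3 H3]] := meet2 uQ uA.
exists Q3; split => // x; rewrite H3 HQ; split.
  case=> -[h0 hs] hA; split => // B; rewrite inE => /orP[/eqP ->|/hs] //.
case=> h0 hs; split; last by apply: hs; rewrite inE eqxx.
by split => // B hB; apply: hs; rewrite inE hB orbT.
Qed.
End Meet.

Section Grp.
Variable k : fieldType.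
Implicit Types (g : 'M[k]_2) (x y : 'cV[k]_2).

Lemma gen_unit (s : seq 'M[k]_2) : all (fun g => g \in unitmx) s ->
  forall g, gen_pgl s g -> g \in unitmx.
Proof.
move=> /allP Hs g; elim => {g}.
- by move=> c c0; rewrite unitmxE det_scalar unitfE expf_neq0.
- by move=> g /Hs.
- by move=> g /Hs; rewrite unitmx_inv.
- by move=> a b _ ua _ ub; rewrite unitmx_mul ua ub.
Qed.

Definition par x y := exists c : k, c != 0 /\ x = c *: y.

Lemma scale_vc2 (c a b : k) : c *: vc2 a b = vc2 (c * a) (c * b).
Proof. apply/matrixP=> i j; rewrite !mxE; by case: (ord2P i) => ->. Qed.

Lemma vc2_inj (a b a' b' : k) : vc2 a b = vc2 a' b' -> a = a' /\ b = b'.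
Proof. move/matrixP => e; have := e 0 0; have := e 1 0; by rewrite !mxE. Qed.

Lemma vc2_neq0 x : x != 0 -> x 0 0 != 0 \/ x 1 0 != 0.
Proof.
move=> xn; case: (eqVneq (x 0 0) 0) => h0; last by left.
case: (eqVneq (x 1 0) 0) => h1; last by right.
by move: xn; rewrite [x]vc2_eta h0 h1 => /eqP []; apply/matrixP=> i j; rewrite !mxE; case: (ord2P i) => ->.
Qed.

Definition bmx x y : 'M[k]_2 := mx2 (x 0 0) (y 0 0) (x 1 0) (y 1 0).

Lemma bmx_e0 x y : bmx x y *m vc2 1 0 = x.
Proof. by rewrite /bmx mulmxv2 !mulr1 !mulr0 !addr0 -vc2_eta. Qed.
Lemma bmx_e1 x y : bmx x y *m vc2 0 1 = y.
Proof. by rewrite /bmx mulmxv2 !mulr1 !mulr0 !add0r -vc2_eta. Qed.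
Lemma bmx_vc2 x y a b : bmx x y *m vc2 a b = a *: x + b *: y.
Proof.
rewrite /bmx mulmxv2 [x]vc2_eta [y]vc2_eta !scale_vc2 !mxE /=.
apply/matrixP=> i j; rewrite !mxE; case: (ord2P i) => -> /=; ring.
Qed.

Lemma npar_unit x y : x != 0 -> y != 0 -> ~ par x y -> bmx x y \in unitmx.
Proof.
move=> xn yn np; rewrite /bmx unit_mx2; apply/negP => /eqP D.
apply: np.
case: (eqVneq (y 0 0) 0) => y0.
  have y1 : y 1 0 != 0 by case: (vc2_neq0 yn) => //; rewrite y0 eqxx.
  have x0 : x 0 0 = 0.
    by move: D; rewrite y0 mul0r subr0 => /eqP; rewrite mulf_eq0 (negbTE y1) orbF => /eqP.
  exists (x 1 0 / y 1 0); split.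
    rewrite mulf_neq0 ?invr_eq0 //; by case: (vc2_neq0 xn) => //; rewrite x0 eqxx.
  rewrite [x]vc2_eta [y]vc2_eta scale_vc2 x0 y0 mulr0 !mxE /=; congr vc2.
  by rewrite divfK.
exists (x 0 0 / y 0 0); split.
  rewrite mulf_neq0 ?invr_eq0 //; apply/negP => /eqP x0.
  move: D; rewrite x0 mul0r sub0r => /eqP; rewrite oppr_eq0 mulf_eq0 (negbTE y0) /= => x1.
  by move: xn; rewrite [x]vc2_eta x0 (eqP x1) => /eqP []; apply/matrixP=> i j; rewrite !mxE; case: (ord2P i) => ->.
rewrite [x]vc2_eta [y]vc2_eta scale_vc2 !mxE /=; congr vc2.
  by rewrite divfK.
apply: (mulfI y0); transitivity (x 0 0 * y 1 0); last by field.
by apply/eqP; rewrite eq_sym -subr_eq0 D.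
Qed.


Lemma conj_col' (B g : 'M[k]_2) (e f z u : 'cV[k]_2) (c : k) : B \in unitmx ->
  B *m e = u -> g *m u = c *: z -> B *m f = z ->
  (invmx B *m g *m B) *m e = c *: f.
Proof.
move=> uB he hg hf.
by rewrite -!mulmxA he hg -hf -scalemxAr mulKmx.
Qed.

Lemma colE0 (M : 'M[k]_2) : M *m vc2 1 0 = vc2 (M 0 0) (M 1 0).
Proof. by rewrite [M]mx2_eta mulmxv2 !mulr1 !mulr0 !addr0 !mxE. Qed.
Lemma colE1 (M : 'M[k]_2) : M *m vc2 0 1 = vc2 (M 0 1) (M 1 1).
Proof. by rewrite [M]mx2_eta mulmxv2 !mulr1 !mulr0 !add0r !mxE. Qed.

End Grp.

Lemma cover_aux (A : Type) (X : eqType) (T : seq X) (P : A -> Prop) (Rel : A -> X -> Prop) :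
  exists L : seq A, (forall a, List.In a L -> P a) /\
    forall g x, P g -> x \in T -> Rel g x -> exists a, List.In a L /\ Rel a x.
Proof.
elim: T => [|x T [L [HL HT]]]; first by exists [::]; split.
have [[a [Pa Ra]]|Hn] := classic (exists a, P a /\ Rel a x).
  exists (a :: L); split; first by move=> b /= [<-|/HL].
  move=> g y Pg; rewrite inE => /orP[/eqP ->|yT] Rg; first by exists a; split => //; left.
  by have [b [Lb Rb]] := HT g y Pg yT Rg; exists b; split => //; right.
exists L; split => // g y Pg; rewrite inE => /orP[/eqP ->|yT] Rg.
  by exfalso; apply: Hn; exists g.
exact: HT Rg.
Qed.

Section Fin.
Variable k : fieldType.
Implicit Types (g : 'M[k]_2) (x y : 'cV[k]_2).

Lemma par_sym x y : par x y -> par y x.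
Proof.
case=> c [c0 ->]; exists c^-1; split; first by rewrite invr_eq0.
by rewrite scalerA mulVf // scale1r.
Qed.

Lemma scalar3 (M : 'M[k]_2) v0 v1 v2 l0 l1 l2 :
  v0 != 0 -> v1 != 0 -> v2 != 0 -> ~ par v1 v0 -> ~ par v2 v0 -> ~ par v2 v1 ->
  M *m v0 = l0 *: v0 -> M *m v1 = l1 *: v1 -> M *m v2 = l2 *: v2 -> M = l0%:M.
Proof.
move=> n0 n1 n2 p10 p20 p21 h0 h1 h2.
have uB : bmx v0 v1 \in unitmx by apply: npar_unit => // /par_sym.
set B := bmx v0 v1 in uB.
set N := invmx B *m M *m B.
have e0 : N *m vc2 1 0 = l0 *: vc2 1 0 := (conj_col' uB (bmx_e0 _ _) h0 (bmx_e0 _ _)).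
have e1 : N *m vc2 0 1 = l1 *: vc2 0 1 := (conj_col' uB (bmx_e1 _ _) h1 (bmx_e1 _ _)).
set u := invmx B *m v2.
have Bu : B *m u = v2 by rewrite /u mulKVmx.
have Nu : N *m u = l2 *: u := (conj_col' uB Bu h2 Bu).
rewrite colE0 scale_vc2 mulr1 mulr0 in e0; case/vc2_inj: e0 => N00 N10.
rewrite colE1 scale_vc2 mulr1 mulr0 in e1; case/vc2_inj: e1 => N01 N11.
have NE : N = mx2 l0 0 0 l1 by rewrite [N]mx2_eta N00 N10 N01 N11.
move: Nu Bu; rewrite NE [u]vc2_eta mulmxv2 scale_vc2 !mul0r !addr0 !add0r bmx_vc2.
case/vc2_inj => E0 E1 Bu.
have u0 : u 0 0 != 0.
  apply/negP => /eqP z0; apply: p21; exists (u 1 0); split.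
    by apply/negP => /eqP z1; move: n2; rewrite -Bu z0 z1 !scale0r addr0 eqxx.
  by rewrite -Bu z0 scale0r add0r.
have u1 : u 1 0 != 0.
  apply/negP => /eqP z1; apply: p20; exists (u 0 0); split => //.
  by rewrite -Bu z1 scale0r addr0.
have l02 : l0 = l2 by apply: (mulIf u0).
have l12 : l1 = l2 by apply: (mulIf u1).
have NE' : N = l0%:M by rewrite NE l12 -l02; apply/matrixP => i j; rewrite !mxE; case: (ord2P i) => ->; case: (ord2P j) => -> /=; rewrite ?mulr1 ?mulr0.
have : B *m N *m invmx B = M by rewrite /N !mulmxA mulmxV // mul1mx mulmxK.
by rewrite NE' -mulmxA mul_scalar_mx -scalemxAr mulmxV // scalemx1.
Qed.
End Fin.

Section Fin2.
Variable k : fieldType.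
Implicit Types (g : 'M[k]_2) (x y : 'cV[k]_2).

Lemma unit_vec_neq0 g x : g \in unitmx -> x != 0 -> g *m x != 0.
Proof.
move=> ug xn; apply/negP => /eqP e; move/negP: xn; apply.
by rewrite -(mulKmx ug x) e mulmx0.
Qed.

Lemma par_eig g a v wv : a \in unitmx -> par (g *m v) wv -> par (a *m v) wv ->
  exists l, l != 0 /\ (invmx a *m g) *m v = l *: v.
Proof.
move=> ua [p [p0 hp]] [q [q0 hq]].
exists (p / q); split; first by rewrite mulf_neq0 ?invr_eq0.
rewrite -mulmxA hp.
have -> : wv = q^-1 *: (a *m v) by rewrite hq scalerA mulVf // scale1r.
by rewrite scalerA -scalemxAr mulKmx.
Qed.

Lemma rel_uniq g a v0 v1 v2 w0 w1 w2 :
  g \in unitmx -> a \in unitmx ->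
  v0 != 0 -> v1 != 0 -> v2 != 0 -> ~ par v1 v0 -> ~ par v2 v0 -> ~ par v2 v1 ->
  par (g *m v0) w0 -> par (g *m v1) w1 -> par (g *m v2) w2 ->
  par (a *m v0) w0 -> par (a *m v1) w1 -> par (a *m v2) w2 ->
  exists c, c != 0 /\ g = c *: a.
Proof.
move=> ug ua n0 n1 n2 p10 p20 p21 g0 g1 g2 a0 a1 a2.
have [l0 [l00 e0]] := par_eig ua g0 a0.
have [l1 [_ e1]] := par_eig ua g1 a1.
have [l2 [_ e2]] := par_eig ua g2 a2.
have := scalar3 n0 n1 n2 p10 p20 p21 e0 e1 e2 => E.
exists l0; split => //.
by rewrite -(mulKVmx ua g) E mul_mx_scalar.
Qed.

Lemma finite_reps (G : 'M[k]_2 -> Prop) (Gu : forall g, G g -> g \in unitmx)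
  (GM : forall a b, G a -> G b -> G (a *m b))
  (v0 : 'cV[k]_2) (g1 g2 : 'M[k]_2) (ws : seq 'cV[k]_2) :
  G g1 -> G g2 -> v0 != 0 -> ~ par (g1 *m v0) v0 -> ~ par (g2 *m v0) v0 ->
  ~ par (g2 *m v0) (g1 *m v0) ->
  (forall g, G g -> exists2 w, w \in ws & exists c : k, c != 0 /\ g *m v0 = c *: w) ->
  exists Lg : seq 'M[k]_2, (forall a, List.In a Lg -> G a) /\
    forall g, G g -> exists g' c, [/\ List.In g' Lg, c != 0 & g = c *: g'].
Proof.
move=> G1 G2 n0 p10 p20 p21 Hws.
set v1 := g1 *m v0 in p10 p21; set v2 := g2 *m v0 in p20 p21.
have n1 : v1 != 0 by apply: unit_vec_neq0 => //; apply: Gu.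
have n2 : v2 != 0 by apply: unit_vec_neq0 => //; apply: Gu.
pose n := size ws.
pose Rel g (i : 'I_n * 'I_n * 'I_n) := [/\ par (g *m v0) (nth 0 ws i.1.1), par (g *m v1) (nth 0 ws i.1.2)
   & par (g *m v2) (nth 0 ws i.2)].
have [L [HL HT]] := cover_aux (enum {: 'I_n * 'I_n * 'I_n}) G Rel.
exists L; split => // g Gg.
have idx h : G h -> exists i : 'I_n, par (h *m v0) (nth 0 ws i).
  move=> Gh; have [wv wvin [c [c0 hc]]] := Hws h Gh.
  exists (Ordinal (etrans (index_mem wv ws) wvin)); rewrite /= nth_index //.
  by exists c.
have [i0 h0] := idx g Gg.
have [i1 h1] : exists i : 'I_n, par (g *m v1) (nth 0 ws i).
  by rewrite /v1 mulmxA; apply: idx; apply: GM.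
have [i2 h2] : exists i : 'I_n, par (g *m v2) (nth 0 ws i).
  by rewrite /v2 mulmxA; apply: idx; apply: GM.
have [a [La [Ra0 Ra1 Ra2]]] := HT g (i0, i1, i2) Gg (mem_enum _ _) (And3 h0 h1 h2).
exists a.
have [c [c0 ->]] := rel_uniq (Gu _ Gg) (Gu _ (HL _ La)) n0 n1 n2 p10 p20 p21 h0 h1 h2 Ra0 Ra1 Ra2.
by exists c.
Qed.
End Fin2.

Lemma in_In (T : eqType) (x : T) (s : seq T) : List.In x s -> x \in s.
Proof.
elim: s => //= a s IH [->|/IH H]; rewrite inE; first by rewrite eqxx.
by rewrite H orbT.
Qed.

Section Fin3.
Variables (R : realType) (F : fieldType) (w : F -> R).
Hypothesis Hw : nonarch_abs w.

Lemma intv_scale (e : F) (z : 'cV[F]_2) : w e <= 1 -> intv w z -> intv w (e *: z).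
Proof.
move=> he hz i; rewrite mxE (wM Hw) -(mulr1 1); apply: ler_pM => //; exact: w_ge0.
Qed.

Lemma intm_of (M : 'M[F]_2) : (forall y, intv w y -> intv w (M *m y)) -> intm w M.
Proof.
move=> H.
have h0 : intv w (vc2 1 0) by apply/intvE; rewrite (w1 Hw) (w0 Hw) ler01.
have h1 : intv w (vc2 0 1) by apply/intvE; rewrite (w1 Hw) (w0 Hw) ler01.
move: (H _ h0) (H _ h1); rewrite colE0 colE1 !intvE => -[a b] [c d].
rewrite [M]mx2_eta; apply/intmE; by split.
Qed.

Lemma sq1 (x : R) : 0 <= x -> x ^+ 2 = 1 -> x = 1.
Proof. move=> h e; rewrite expr2 in e; nra. Qed.
End Fin3.

Lemma caseC (R : realType) (k : fieldType) (v : k -> R) (Hv : nonarch_abs v)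
  (G : 'M[k]_2 -> Prop) (Gu : forall g, G g -> g \in unitmx)
  (GM : forall a b, G a -> G b -> G (a *m b))
  (Lg : seq 'M[k]_2) (HL : forall a, List.In a Lg -> G a)
  (Hcov : forall g, G g -> exists g' c, [/\ List.In g' Lg, c != 0 & g = c *: g']) :
  potential_good_reduction v G.
Proof.
have [K [w [Hw Hext Hsq]]] := tower Hv (map determinant Lg).
pose phi (g : 'M[k]_2) : 'M[K]_2 := map_mx (GRing.in_alg K) g.
have phiM a b : phi (a *m b) = phi a *m phi b by rewrite /phi map_mxM.
have phiZ c a : phi (c *: a) = (c%:A) *: phi a by rewrite /phi map_mxZ.
have wdet a : w (\det (phi a)) = v (\det a) by rewrite /phi det_map_mx /= Hext.
have wg := w_ge0 Hw.
pose Gh (A : 'M[K]_2) := exists g mu, [/\ G g, A = mu *: phi g & w (\det A) = 1].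
have [Lh [HLh1 HLh2]] : exists Lh : seq 'M[K]_2, (forall A, A \in Lh -> Gh A) /\
   forall g', List.In g' Lg -> exists A mu, A \in Lh /\ A = mu *: phi g'.
  have : forall a, List.In a Lg -> G a /\ exists y : K, w (\det a)%:A = w y ^+ 2.
    move=> a La; split; first exact: HL.
    by apply: Hsq; apply/mapP; exists a => //; apply: in_In.
  elim: (Lg) => [|a l IH] H; first by exists [::].
  have [Ga [y Hy]] := H a (or_introl erefl).
  have [Lh' [h1 h2]] := IH (fun b Lb => H b (or_intror Lb)).
  have da : \det a != 0 by rewrite -unitfE -unitmxE Gu.
  have y0 : y != 0.
    apply/negP => /eqP y0; move: Hy; rewrite y0 (w0 Hw) expr0n /= Hext.
    by move/(w_eq0 Hv)/eqP; rewrite (negbTE da).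
  exists ((y^-1 *: phi a) :: Lh'); split.
    move=> A; rewrite inE => /orP[/eqP ->|/h1 //]; exists a, y^-1; split => //.
    have wp z : w (z ^+ 2) = w z ^+ 2 by rewrite !expr2 (wM Hw).
    rewrite detZ (wM Hw) wdet -Hext Hy wp -exprMn -(wM Hw) mulVf //.
    by rewrite (w1 Hw) expr1n.
  move=> g' [<-|/h2 [A [mu [HA eA]]]].
    by exists (y^-1 *: phi a), y^-1; rewrite inE eqxx.
  by exists A, mu; rewrite inE HA orbT.
have Ghu A : Gh A -> A \in unitmx.
  case=> g [mu [_ _ hd]]; rewrite unitmxE unitfE; apply/negP => /eqP d0.
  by move: hd; rewrite d0 (w0 Hw) => /eqP; rewrite eq_sym oner_eq0.
have Ghmu g mu : Gh (mu *: phi g) -> mu != 0.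
  move=> /Ghu; apply: contraL => /eqP ->; rewrite scale0r unitmxE det0 unitfE eqxx //.
have step2 g : G g -> exists A mu, [/\ A \in Lh, mu != 0 & A = mu *: phi g].
  move=> Gg; have [g' [c [Lg' c0 ge]]] := Hcov g Gg.
  have [A [mu [LA eA]]] := HLh2 g' Lg'.
  have mu0 : mu != 0 by apply: (Ghmu g'); rewrite -eA; apply: HLh1.
  have cA0 : c%:A != 0 :> K.
    apply/negP => /eqP e; move: (Hext c); rewrite e (w0 Hw) => /esym/(w_eq0 Hv)/eqP.
    by rewrite (negbTE c0).
  exists A, (mu / c%:A); split => //; first by rewrite mulf_neq0 ?invr_eq0.
  by rewrite eA ge phiZ scalerA divfK.
have GhM A B : Gh A -> Gh B -> Gh (A *m B).
  case=> g [mu [Gg eA hA]] [h [nu [Gh' eB hB]]].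
  exists (g *m h), (mu * nu); split; first exact: GM.
    by rewrite eA eB phiM -scalemxAl -scalemxAr scalerA.
  by rewrite det_mulmx (wM Hw) hA hB mulr1.
have step4 A : Gh A -> exists A' eps, [/\ A' \in Lh, w eps = 1 & A = eps *: A'].
  case=> g [mu [Gg eA hA]].
  have [A' [mu' [LA mu0 eA']]] := step2 g Gg.
  have hA' : Gh A' by apply: HLh1.
  have E : A = (mu / mu') *: A' by rewrite eA eA' scalerA divfK.
  exists A', (mu / mu'); split => //.
  apply: sq1; first exact: wg.
  have [_ [_ [_ _ hA'']]] := hA'.
  move: hA; rewrite E detZ (wM Hw) hA'' mulr1.
  by rewrite !expr2 (wM Hw).
have uLh : all (fun A => A \in unitmx) Lh.
  by apply/allP => A /HLh1 /Ghu.
have [Q [uQ HQ]] := meet_list Hw (unitmx1 _ _) uLh.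
exists K, w; split => //.
exists Q; split => // g Gg.
have [A [mu [LA mu0 AE]]] := step2 g Gg.
have GhA : Gh A := HLh1 A LA.
exists mu; split => //.
have -> : mu *: (Q *m map_mx (fun a : k => a%:A) g *m invmx Q) = Q *m A *m invmx Q.
  by rewrite AE scalemxAl scalemxAr.
split.
- apply: (intm_of Hw) => y hy.
  set x := invmx Q *m y.
  have Qx : Q *m x = y by rewrite /x mulKVmx.
  have [_ hx] : intv w (1%:M *m x) /\ (forall A', A' \in Lh -> intv w (A' *m x)).
    by apply/HQ; rewrite Qx.
  rewrite -!mulmxA -/x; apply/HQ; split.
    by rewrite mul1mx; apply: hx.
  move=> A' LA'.
  have [A'' [eps [LA'' we eE]]] := step4 _ (GhM _ _ (HLh1 _ LA') GhA).
  rewrite mulmxA eE -scalemxAl; apply: (intv_scale Hw); first by rewrite we.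
  exact: hx.
- have [_ [_ [_ _ hA]]] := GhA.
  by rewrite !det_mulmx det_inv mulrC mulrA mulVf ?mul1r // -unitfE -unitmxE.
Qed.

Unset Implicit Arguments.
Theorem proposition2p14 (R : realType) (k : fieldType) (v : k -> R)
    (Hv : nonarch_abs v) (Hnt : nontrivial_abs v) (Hcomp : complete_abs v)
    (s : seq 'M[k]_2) (Hs : all (fun g => g \in unitmx) s)
    (Hnsi : ~ strongly_irreducible (gen_pgl s)) :
  potential_good_reduction v (gen_pgl s)
  \/ conj_into (@affine_mx k) (gen_pgl s)
  \/ conj_into (@monomial_mx k) (gen_pgl s).
Proof.
set G := gen_pgl s.
have Gu : forall g, G g -> g \in unitmx := gen_unit Hs.
have GM : forall a b, G a -> G b -> G (a *m b) := fun a b => @gen_pgl_mul k s a b.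
have [v0 [v0n [ws Hws]]] : has_finite_orbit G by apply: NNPP.
case: (classic (forall g, G g -> par (g *m v0) v0)) => [HA|HA].
  right; left.
  pose e : 'cV[k]_2 := if v0 0 0 != 0 then vc2 0 1 else vc2 1 0.
  have uB : bmx v0 e \in unitmx.
    rewrite /bmx unit_mx2 /e; case: ifP => h; rewrite !mxE /=.
      by rewrite mulr1 mul0r subr0.
    rewrite mulr0 mul1r sub0r oppr_eq0.
    by case: (vc2_neq0 v0n) => //; rewrite h.
  exists (invmx (bmx v0 e)); split; first by rewrite unitmx_inv.
  move=> g Gg; rewrite invmxK.
  have [c [c0 hc]] := HA g Gg.
  have := conj_col' uB (bmx_e0 v0 e) hc (bmx_e0 v0 e).
  by rewrite colE0 scale_vc2 mulr0 => /vc2_inj [_ H].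
have [g1 [G1' np1]] : exists g1, G g1 /\ ~ par (g1 *m v0) v0.
  by apply: NNPP => H; apply: HA => g Gg; apply: NNPP => H2; apply: H; exists g.
set v1 := g1 *m v0 in np1.
have n1 : v1 != 0 := unit_vec_neq0 (Gu _ G1') v0n.
have uB : bmx v0 v1 \in unitmx by apply: npar_unit => // /par_sym.
case: (classic (forall g, G g -> par (g *m v0) v0 \/ par (g *m v0) v1)) => [HB|HB].
  right; right.
  exists (invmx (bmx v0 v1)); split; first by rewrite unitmx_inv.
  move=> g Gg; rewrite invmxK.
  have gv1 : g *m v1 = (g *m g1) *m v0 by rewrite mulmxA.
  have inj : forall (x y z : 'cV[k]_2) (a b : k), g *m x = a *: z -> g *m y = b *: z ->
      b != 0 -> a != 0 -> par x y.
    move=> x y z a b hx hy b0 a0; exists (a / b); split; first by rewrite mulf_neq0 ?invr_eq0.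
    rewrite -(mulKmx (Gu _ Gg) x) hx.
    have -> : z = b^-1 *: (g *m y) by rewrite hy scalerA mulVf // scale1r.
    by rewrite scalerA -scalemxAr mulKmx // Gu.
  case: (HB g Gg) => -[c [c0 hc]]; case: (HB _ (GM _ _ Gg G1')) => -[d [d0 hd]];
    rewrite -gv1 in hd.
  - by exfalso; apply: np1; exact: inj hd hc c0 d0.
  - left.
    have := conj_col' uB (bmx_e0 v0 v1) hc (bmx_e0 v0 v1).
    rewrite colE0 scale_vc2 mulr0 => /vc2_inj [_ H1].
    have := conj_col' uB (bmx_e1 v0 v1) hd (bmx_e1 v0 v1).
    by rewrite colE1 scale_vc2 mulr0 => /vc2_inj [H2 _].
  - right.
    have := conj_col' uB (bmx_e0 v0 v1) hc (bmx_e1 v0 v1).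
    rewrite colE0 scale_vc2 mulr0 => /vc2_inj [H1 _].
    have := conj_col' uB (bmx_e1 v0 v1) hd (bmx_e0 v0 v1).
    by rewrite colE1 scale_vc2 mulr0 => /vc2_inj [_ H2].
  - by exfalso; apply: np1; exact: inj hd hc c0 d0.
have [g2 [G2 np2]] : exists g2, G g2 /\ ~ (par (g2 *m v0) v0 \/ par (g2 *m v0) v1).
  by apply: NNPP => H; apply: HB => g Gg; apply: NNPP => H2; apply: H; exists g.
left.
have [Lg [HL Hcov]] := finite_reps Gu GM G1' G2 v0n np1
  (fun h => np2 (or_introl h)) (fun h => np2 (or_intror h)) Hws.
exact: (@caseC R k v Hv G Gu GM Lg HL Hcov).
Qed.
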